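(* Let $D$ be an integral domain with quotient field $K$, $\mathcal S$ a multiplicative subset of $D[X]$ ($0\notin\mathcal S$), $\circlearrowleft_{\mathcal S}$ the semistar operation $E\mapsto ED[X]_{\mathcal S}\cap K$ on $D$, $R:=D^{\circlearrowleft_{\mathcal S}}$, and $\iota:D\hookrightarrow R$ the inclusion. Then $R$ is $t$-linked to $(D,\circlearrowleft_{\mathcal S})$, and $\mathcal S\subseteq\mathcal N^{v_R}$ (equivalently, $(\circlearrowleft_{\mathcal S})_\iota$ is a (semi)star operation on $R$). Moreover, $(\circlearrowleft_{\mathcal S})_\iota=w_R$ if and only if the extended saturation $\mathcal S^{\sharp_R}$ of $\mathcal S$ in $R[X]$ equals $\mathcal N^{v_R}$.
   Context: $\overline{\boldsymbol F}(A)$ is the set of nonzero $A$-submodules of $K$ for a domain $A$ with quotient field $K$. A semistar operation on $A$ is a map $\star:\overline{\boldsymbol F}(A)\to\overline{\boldsymbol F}(A)$ with $(xE)^\star=xE^\star$ for $0\ne x\in K$, $E\subseteq F\Rightarrow E^\star\subseteq F^\star$, $E\subseteq E^\star$, $(E^\star)^\star=E^\star$; it is a (semi)star operation if $A^\star=A$. For an overring $R$ of $D$ and a semistar operation $\star$ on $D$, $\star_\iota$ is the semistar operation on $R$ given by $E^{\star_\iota}=E^\star$ for $E\in\overline{\boldsymbol F}(R)\subseteq\overline{\boldsymbol F}(D)$. $v_R$: $E\mapsto(R:(R:E))$; $t_R$ is its finite-type version $E^{t_R}=\bigcup\{F^{v_R}\mid F\subseteq E$ nonzero finitely generated$\}$;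 $w_R$ is the operation $E\mapsto\bigcap\{ER_P\mid P$ a maximal $t_R$-ideal of $R\}$. For $g\in R[X]$, $\mathrm{c}_R(g)$ is the ideal generated by its coefficients, and $\mathcal N^{v_R}=\{g\in R[X]\mid g\neq0,\ \mathrm{c}_R(g)^{v_R}=R\}$. An overring $R$ is $t$-linked to $(D,\star)$ if for each nonzero finitely generated ideal $I$ of $D$, $I^\star=D^\star$ implies $(IR)^{t_R}=R$. For a multiplicative set $\mathcal S\subseteq R[X]$, its extended saturation in $R[X]$ is $R[X]\setminus\bigcup\{P[X]\mid P\in\mathrm{Spec}(R),\ P[X]\cap\mathcal S=\emptyset\}$. *)

(* Defs.v *)
From HB Require Import structures.
From mathcomp Require Import all_boot all_order all_algebra.
Set Implicit Arguments. Unset Strict Implicit. Unset Printing Implicit Defensive.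
Import Order.TTheory GRing.Theory Num.Theory.
Local Open Scope ring_scope.

(* Subsets of a field K are predicates K -> Prop. The domain D is modelled as a
   subring of a field K whose quotient field is K; overrings are subrings of K
   containing D.  Nonzero A-submodules of K play the role of F-bar(A). *)

Section Defs.
Variable K : fieldType.

Definition subset (E F : K -> Prop) := forall x, E x -> F x.
Definition seteq (E F : K -> Prop) := forall x, E x <-> F x.

Definition is_subring (A : K -> Prop) :=
  A 1 /\ (forall x y, A x -> A y -> A (x - y)) /\ (forall x y, A x -> A y -> A (x * y)).

Definition is_quotient_field (A : K -> Prop) :=
  forall x, exists a b, A a /\ A b /\ b != 0 /\ x = a / b.

Definition submodule (A E : K -> Prop) :=
  E 0 /\ (forall x y, E x -> E y -> E (x + y)) /\ (forall a x, A a -> E x -> E (a * x)).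
Definition nz_submodule (A E : K -> Prop) :=
  submodule A E /\ exists x, E x /\ x != 0.

Definition scale (x : K) (E : K -> Prop) : K -> Prop := fun y => exists e, E e /\ y = x * e.

Definition is_semistar (A : K -> Prop) (star : (K -> Prop) -> (K -> Prop)) :=
  (forall E, nz_submodule A E -> nz_submodule A (star E)) /\
  (forall x E, x != 0 -> nz_submodule A E -> seteq (star (scale x E)) (scale x (star E))) /\
  (forall E F, nz_submodule A E -> nz_submodule A F -> subset E F -> subset (star E) (star F)) /\
  (forall E, nz_submodule A E -> subset E (star E)) /\
  (forall E, nz_submodule A E -> seteq (star (star E)) (star E)).

Definition span (A : K -> Prop) (l : seq K) : K -> Prop :=
  fun x => exists f : nat -> K, (forall i, A (f i)) /\ x = \sum_(i < size l) f i * l`_i.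

Definition colon (A E : K -> Prop) : K -> Prop := fun x => forall e, E e -> A (x * e).
Definition vop (A E : K -> Prop) : K -> Prop := colon A (colon A E).
Definition top (A E : K -> Prop) : K -> Prop :=
  fun x => exists l : seq K, (forall y, y \in l -> E y) /\ has (fun y => y != 0) l /\
                             vop A (span A l) x.

Definition is_ideal (A I : K -> Prop) := submodule A I /\ subset I A.
Definition t_ideal (A I : K -> Prop) :=
  is_ideal A I /\ (exists x, I x /\ x != 0) /\ seteq (top A I) I.
Definition max_t_ideal (A P : K -> Prop) :=
  t_ideal A P /\ ~ P 1 /\
  (forall Q, t_ideal A Q -> ~ Q 1 -> subset P Q -> seteq Q P).

(* E^{w_A} = intersection of E A_P over maximal t-ideals P *)
Definition wop (A E : K -> Prop) : K -> Prop :=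
  fun x => forall P, max_t_ideal A P -> exists s, A s /\ ~ P s /\ E (s * x).

Definition prime_ideal (A P : K -> Prop) :=
  is_ideal A P /\ ~ P 1 /\ (forall a b, A a -> A b -> P (a * b) -> P a \/ P b).

Definition polyOverP (A : K -> Prop) (g : {poly K}) := forall i, A g`_i.

Definition mult_subset (D : K -> Prop) (S : {poly K} -> Prop) :=
  (forall s, S s -> polyOverP D s) /\ S 1 /\ ~ S 0 /\
  (forall s t, S s -> S t -> S (s * t)).

(* E |-> E D[X]_S \cap K : x = f/s with f in E D[X] = E[X], s in S,
   i.e. x * s has all coefficients in E *)
Definition circS (S : {poly K} -> Prop) (E : K -> Prop) : K -> Prop :=
  fun x => exists s, S s /\ forall i, E (x * s`_i).

Definition Nv (R : K -> Prop) (g : {poly K}) :=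
  polyOverP R g /\ g != 0 /\ seteq (vop R (span R g)) R.

Definition sharp (R : K -> Prop) (S : {poly K} -> Prop) (g : {poly K}) :=
  polyOverP R g /\
  forall P, prime_ideal R P -> (forall s, S s -> ~ polyOverP P s) -> ~ polyOverP P g.

Definition t_linked (D : K -> Prop) (star : (K -> Prop) -> (K -> Prop)) (R : K -> Prop) :=
  forall l : seq K, (forall y, y \in l -> D y) -> has (fun y => y != 0) l ->
    seteq (star (span D l)) (star D) -> seteq (top R (span R l)) R.

End Defs.

(* Main.v *)
Require Import Defs.
From HB Require Import structures.
From mathcomp Require Import all_boot all_order all_algebra.
From mathcomp Require classical_sets.
From Stdlib Require Import Classical FunctionalExtensionality PropExtensionality.
Set Implicit Arguments. Unset Strict Implicit. Unset Printing Implicit Defensive.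
Import GRing.Theory.
From mathcomp Require Import ring.
Import Defs.
Local Open Scope ring_scope.

Lemma zorn_pred (T : Type) (P : (T -> Prop) -> Prop) (X0 : T -> Prop) :
  P X0 -> (exists x, X0 x) ->
  (forall F : (T -> Prop) -> Prop, (forall X, F X -> P X /\ (forall x, X0 x -> X x)) ->
     (exists X, F X) ->
     (forall X Y, F X -> F Y -> (forall x, X x -> Y x) \/ (forall x, Y x -> X x)) ->
     P (fun x => exists X, F X /\ X x)) ->
  exists M, P M /\ (forall x, X0 x -> M x) /\
    (forall B, P B -> (forall x, M x -> B x) -> forall x, B x -> M x).
Proof.
move=> PX0 [x0 X0x0] Hch.
pose P' (A : T -> Prop) := (P A /\ (forall x, X0 x -> A x)) \/ A = (fun _ => False).
have [M [PM Mmax]] : exists A, P' A /\ forall B, classical_sets.proper A B -> ~ P' B.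
  apply: classical_sets.Zorn_bigcup => F FP Ftot.
  case: (classic (exists X, F X /\ P X /\ (forall x, X0 x -> X x))) => [[X [FX PX]]|nF].
    left.
    pose F' (Y : T -> Prop) := F Y /\ P Y /\ (forall x, X0 x -> Y x).
    have -> : classical_sets.bigcup F id = (fun x => exists X, F' X /\ X x).
      apply: functional_extensionality => x; apply: propositional_extensionality.
      split.
        case=> Y FY Yx; exists Y; split=> //; split=> //.
        case: (FP Y FY) => // Y0; by rewrite Y0 in Yx.
      by case=> Y [[FY _] Yx]; exists Y.
    split.
      apply: Hch.
      - by move=> Y [].
      - by exists X.
      move=> Y Z [FY _] [FZ _]; case: (Ftot Y Z FY FZ) => h; [left|right]; exact: h.
    move=> x X0x; exists X; case: PX => PX X0X; split; [by [] | exact: X0X].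
  right; apply: functional_extensionality => x; apply: propositional_extensionality.
  split=> // -[Y FY Yx]; case: (FP Y FY) => [PY|Y0].
    by case: nF; exists Y.
  by rewrite Y0 in Yx.
case: PM => [[PM X0M]|M0].
  exists M; split=> //; split=> // B PB MB x Bx.
  apply: NNPP => nMx.
  apply: (Mmax B); first by split=> // h; exact: nMx (h x Bx).
  left; split=> // y /X0M; exact: MB.
exfalso; apply: (Mmax X0); last by left.
rewrite M0; split=> // h; exact: h x0 X0x0.
Qed.


Section Main.
Variable K : fieldType.
Variables (D : K -> Prop) (S : {poly K} -> Prop).
Hypothesis hD : is_subring D.
Hypothesis hS : mult_subset D S.

Lemma D1 : D 1. Proof. by case: hD. Qed.
Lemma DB x y : D x -> D y -> D (x - y). Proof. by case: hD => _ [H _]; apply: H. Qed.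
Lemma DM x y : D x -> D y -> D (x * y). Proof. by case: hD => _ [_ H]; apply: H. Qed.
Lemma D0 : D 0. Proof. by rewrite -(subrr 1); apply: DB; exact: D1. Qed.
Lemma DN x : D x -> D (- x). Proof. move=> Dx; rewrite -sub0r. apply: DB. exact: D0. exact Dx. Qed.
Lemma DD x y : D x -> D y -> D (x + y).
Proof. by move=> Dx Dy; rewrite -(opprK y); apply: DB => //; exact: DN. Qed.

Lemma S_D s : S s -> polyOverP D s. Proof. by case: hS => h _; apply: h. Qed.
Lemma S1 : S 1. Proof. by case: hS => _ []. Qed.
Lemma S_neq0 : ~ S 0. Proof. by case: hS => _ [_ []]. Qed.
Lemma SM s t : S s -> S t -> S (s * t). Proof. by case: hS => _ [_ [_ H]]; apply: H. Qed.

Definition Dmod (E : K -> Prop) :=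
  E 0 /\ (forall x y, E x -> E y -> E (x + y)) /\ (forall d x, D d -> E x -> E (d * x)).

Lemma coefM_in (C : K -> Prop) (c : K) (p q : {poly K}) k :
  C 0 -> (forall x y, C x -> C y -> C (x + y)) ->
  (forall i j, C (c * (p`_i * q`_j))) -> C (c * (p * q)`_k).
Proof.
move=> C0 CD H; rewrite coefM mulr_sumr.
by apply: (big_ind C) => // i _; apply: H.
Qed.

Lemma Ev_mulr E x (s t : {poly K}) : Dmod E -> polyOverP D t ->
  (forall i, E (x * s`_i)) -> forall i, E (x * (s * t)`_i).
Proof.
move=> [E0 [ED EM]] Dt Hs k; apply: coefM_in => // i j.
by rewrite mulrA mulrC; apply: EM.
Qed.

Lemma Ev_mul2 E x (s t : {poly K}) : Dmod E ->
  (forall i j, E (x * s`_i * t`_j)) -> forall k, E (x * (s * t)`_k).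
Proof.
move=> [E0 [ED EM]] H k; apply: coefM_in => // i j; by rewrite mulrA.
Qed.

Lemma prod_S (n : nat) (Q : nat -> {poly K} -> Prop) :
  (forall i t u, Q i t -> S u -> Q i (t * u)) ->
  (forall i, (i < n)%N -> exists t, S t /\ Q i t) ->
  exists t, S t /\ forall i, (i < n)%N -> Q i t.
Proof.
move=> Qup; elim: n => [|n IH] H.
  by exists 1; split=> //; exact: S1.
have [t [St Qt]] : exists t, S t /\ forall i, (i < n)%N -> Q i t.
  by apply: IH => i lt; apply: H; apply: ltnW.
have [u [Su Qu]] := H n (ltnSn n).
exists (t * u); split; first exact: SM.
move=> i; rewrite ltnS leq_eqVlt => /orP[/eqP ->|lt].
  by rewrite mulrC; apply: Qup.
by apply: Qup => //; apply: Qt.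
Qed.

Lemma circS_ext E x : Dmod E -> E x -> circS S E x.
Proof.
move=> [E0 _] Ex; exists 1; split; first exact: S1.
by move=> i; rewrite coef1; case: (i == 0%N); rewrite ?mulr1 ?mulr0.
Qed.

Lemma circS_mono (E F : K -> Prop) x : (forall y, E y -> F y) -> circS S E x -> circS S F x.
Proof. by move=> EF [s [Ss H]]; exists s; split=> // i; apply: EF. Qed.

Lemma circS_add E x y : Dmod E -> circS S E x -> circS S E y -> circS S E (x + y).
Proof.
move=> hE [s [Ss Hs]] [t [St Ht]]; exists (s * t); split; first exact: SM.
move=> i; rewrite mulrDl; case: (hE) => _ [ED _]; apply: ED.
  by apply: Ev_mulr => //; apply: S_D.
by rewrite [s * t]mulrC; apply: Ev_mulr => //; apply: S_D.
Qed.

Lemma circS_mul (A E : K -> Prop) a x : Dmod E ->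
  (forall a e, A a -> E e -> E (a * e)) ->
  circS S A a -> circS S E x -> circS S E (a * x).
Proof.
move=> [E0 [ED _]] AE [u [Su Hu]] [s [Ss Hs]]; exists (u * s); split; first exact: SM.
move=> k; apply: coefM_in => // i j.
by rewrite mulrACA; apply: AE.
Qed.

Lemma circS_idem E x : Dmod E -> circS S (circS S E) x -> circS S E x.
Proof.
move=> hE [s [Ss Hs]].
have [t [St Ht]] : exists t, S t /\ forall i, (i < size s)%N ->
    forall j, E (x * s`_i * t`_j).
  apply: prod_S.
    move=> i t u Ht Su; apply: Ev_mulr => //; exact: S_D.
  move=> i _; case: (Hs i) => t [St Ht]; by exists t.
exists (s * t); split; first exact: SM.
apply: Ev_mul2 => // i j; case: (ltnP i (size s)) => lt; first exact: Ht.
rewrite nth_default // mulr0 mul0r; by case: hE.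
Qed.

Lemma DmodD : Dmod D.
Proof. split; [exact: D0|split]; [exact: DD | move=> d x; exact: DM]. Qed.

Lemma D_R x : D x -> circS S D x.
Proof. move=> Dx; apply: circS_ext => //; exact: DmodD. Qed.

Lemma R_add x y : circS S D x -> circS S D y -> circS S D (x + y).
Proof. apply: circS_add; exact: DmodD. Qed.
Lemma R_mul x y : circS S D x -> circS S D y -> circS S D (x * y).
Proof. apply: circS_mul; [exact: DmodD | move=> ? ?; exact: DM]. Qed.
Lemma R_opp x : circS S D x -> circS S D (- x).
Proof. by move=> Rx; rewrite -mulN1r; apply: R_mul => //; apply: D_R; apply: DN; exact: D1. Qed.
Lemma R_0 : circS S D 0. Proof. apply: D_R; exact: D0. Qed.
Lemma R_1 : circS S D 1. Proof. apply: D_R; exact: D1. Qed.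
Lemma R_sat x : circS S (circS S D) x -> circS S D x.
Proof. apply: circS_idem; exact: DmodD. Qed.
Lemma R_subring : is_subring (circS S D).
Proof.
split; first exact: R_1.
split; last exact: R_mul.
by move=> x y Rx Ry; apply: R_add => //; apply: R_opp.
Qed.

End Main.

Section T.
Variable K : fieldType.
Variable A : K -> Prop.
Hypothesis hA : is_subring A.

Let A0 : A 0. Proof. exact: D0. Qed.
Let A1 : A 1. Proof. exact: D1. Qed.
Let AD x y : A x -> A y -> A (x + y). Proof. exact: DD. Qed.
Let AM x y : A x -> A y -> A (x * y). Proof. exact: DM. Qed.

Lemma vop_mono (E F : K -> Prop) x : (forall y, E y -> F y) -> vop A E x -> vop A F x.
Proof. by move=> EF Hx z Hz; apply: Hx => e Ee; apply: Hz; apply: EF. Qed.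

Lemma vop_ext (E : K -> Prop) y : E y -> vop A E y.
Proof. by move=> Ey z Hz; rewrite mulrC; apply: Hz. Qed.

Lemma vop_idem (E : K -> Prop) x : vop A (vop A E) x -> vop A E x.
Proof.
move=> Hx z Hz; apply: Hx => e He; rewrite mulrC; exact: He.
Qed.

Lemma vop_mod (E : K -> Prop) : Dmod A (vop A E).
Proof.
split; first by move=> z _; rewrite mul0r.
split.
  by move=> x y Hx Hy z Hz; rewrite mulrDl; apply: AD; [apply: Hx|apply: Hy].
by move=> a x Aa Hx z Hz; rewrite -mulrA; apply: AM => //; apply: Hx.
Qed.

Lemma span_mod (l : seq K) : Dmod A (span A l).
Proof.
split; first by exists (fun _ => 0); split=> //; rewrite big1 // => i _; rewrite mul0r.
split.
  move=> x y [f [Af ->]] [g [Ag ->]]; exists (fun i => f i + g i); split.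
    by move=> i; apply: AD.
  by rewrite -big_split /=; apply: eq_bigr => i _; rewrite mulrDl.
move=> a x Aa [f [Af ->]]; exists (fun i => a * f i); split.
  by move=> i; apply: AM.
by rewrite mulr_sumr; apply: eq_bigr => i _; rewrite mulrA.
Qed.

Lemma span_sub (E : K -> Prop) (l : seq K) x : Dmod A E ->
  (forall y, y \in l -> E y) -> span A l x -> E x.
Proof.
move=> [E0 [ED EM]] lE [f [Af ->]].
apply: (big_ind E) => // i _; apply: EM => //; apply: lE; exact: mem_nth.
Qed.

Lemma span_nth (l : seq K) j : span A l l`_j.
Proof.
exists (fun i => (i == j)%:R); split.
  by move=> i; case: (i == j); rewrite ?A0 ?A1.
case: (ltnP j (size l)) => lt.
  rewrite (bigD1 (Ordinal lt)) //= eqxx mul1r big1 ?addr0 // => i.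
  by rewrite -val_eqE /= => /negbTE ->; rewrite mul0r.
rewrite nth_default // big1 // => i _.
have : (i != j :> nat) by rewrite neq_ltn (leq_trans (ltn_ord i) lt).
by move/negbTE ->; rewrite mul0r.
Qed.

Lemma span_in (l : seq K) y : y \in l -> span A l y.
Proof. by move=> yl; rewrite -(nth_index 0 yl); apply: span_nth. Qed.

Lemma span_A (l : seq K) x : (forall y, y \in l -> A y) -> span A l x -> A x.
Proof. move=> lA; apply: span_sub => //; split=> //; split=> //. Qed.

Lemma vop_A (l : seq K) x : (forall y, y \in l -> A y) -> vop A (span A l) x -> A x.
Proof.
move=> lA Hx; rewrite -(mulr1 x); apply: Hx => e He; rewrite mul1r.
exact: span_A He.
Qed.

Lemma vop_A_eq (l : seq K) : (forall y, y \in l -> A y) -> vop A (span A l) 1 ->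
  seteq (vop A (span A l)) A.
Proof.
move=> lA H1 x; split; first exact: vop_A.
move=> Ax; rewrite -(mulr1 x); case: (vop_mod (span A l)) => _ [_ HM]; exact: HM.
Qed.

Lemma span_cat_l (l1 l2 : seq K) x : span A l1 x -> span A (l1 ++ l2) x.
Proof.
apply: span_sub; first exact: span_mod.
by move=> y yl; apply: span_in; rewrite mem_cat yl.
Qed.

Lemma span_cat_r (l1 l2 : seq K) x : span A l2 x -> span A (l1 ++ l2) x.
Proof.
apply: span_sub; first exact: span_mod.
by move=> y yl; apply: span_in; rewrite mem_cat yl orbT.
Qed.

Lemma top_mono (I J : K -> Prop) x : (forall y, I y -> J y) -> top A I x -> top A J x.
Proof. by move=> IJ [l [lI [hl Hx]]]; exists l; split=> // y /lI; apply: IJ. Qed.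

Lemma top_ext (I : K -> Prop) x : (exists x0, I x0 /\ x0 != 0) -> I x -> top A I x.
Proof.
move=> [x0 [Ix0 nz]] Ix; exists [:: x; x0]; split.
  by move=> y; rewrite !inE => /orP[] /eqP ->.
split; first by rewrite /= nz orbT.
by apply: vop_ext; apply: span_in; rewrite inE eqxx.
Qed.

Lemma top_lists (I : K -> Prop) (L : seq K) : (forall y, y \in L -> top A I y) ->
  exists L', (forall y, y \in L' -> I y) /\ forall y, y \in L -> vop A (span A L') y.
Proof.
elim: L => [|a L IH] H.
  by exists [::]; split.
have [L' [L'I HL']] : exists L', (forall y, y \in L' -> I y) /\
    forall y, y \in L -> vop A (span A L') y.
  by apply: IH => y yL; apply: H; rewrite inE yL orbT.
have [La [LaI [_ Ha]]] := H a (mem_head _ _).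
exists (La ++ L'); split.
  by move=> y; rewrite mem_cat => /orP[]; [apply: LaI|apply: L'I].
move=> y; rewrite inE => /orP[/eqP ->|yL].
  by apply: vop_mono Ha => z; apply: span_cat_l.
by apply: vop_mono (HL' y yL) => z; apply: span_cat_r.
Qed.

Lemma top_idem (I : K -> Prop) x : top A (top A I) x -> top A I x.
Proof.
move=> [L [LI [hL Hx]]].
have [L' [L'I HL']] := top_lists LI.
have [y0 y0L nz] := hasP hL.
have [L0 [L0I [hL0 _]]] := LI y0 y0L.
exists (L0 ++ L'); split.
  by move=> y; rewrite mem_cat => /orP[]; [apply: L0I|apply: L'I].
split; first by rewrite has_cat hL0.
apply: vop_idem; apply: vop_mono Hx => e He.
apply: span_sub He; first exact: vop_mod.
move=> y yL; apply: vop_mono (HL' y yL) => z; exact: span_cat_r.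
Qed.

Lemma top_ideal (I : K -> Prop) : is_ideal A I -> (exists x0, I x0 /\ x0 != 0) ->
  is_ideal A (top A I).
Proof.
move=> [[I0 [ID IM]] IA] [x0 [Ix0 nz]].
have vm := vop_mod.
split; last first.
  move=> x [L [LI [_ Hx]]]; apply: vop_A Hx => y /LI; exact: IA.
split.
  exists [:: x0]; split; first by move=> y; rewrite inE => /eqP ->.
  split; first by rewrite /= nz.
  by case: (vm (span A [:: x0])).
split.
  move=> x y [L1 [L1I [h1 H1]]] [L2 [L2I [h2 H2]]]; exists (L1 ++ L2); split.
    by move=> z; rewrite mem_cat => /orP[]; [apply: L1I|apply: L2I].
  split; first by rewrite has_cat h1.
  case: (vm (span A (L1 ++ L2))) => _ [VD _]; apply: VD.
    by apply: vop_mono H1 => z; apply: span_cat_l.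
  by apply: vop_mono H2 => z; apply: span_cat_r.
move=> a x Aa [L [LI [h H]]]; exists L; split=> //; split=> //.
case: (vm (span A L)) => _ [_ VM]; exact: VM.
Qed.

Lemma t_ideal_top (I : K -> Prop) : is_ideal A I -> (exists x0, I x0 /\ x0 != 0) ->
  t_ideal A (top A I).
Proof.
move=> hI [x0 [Ix0 nz]]; split; first by apply: top_ideal => //; exists x0.
have nzt : exists x0, top A I x0 /\ x0 != 0.
  by exists x0; split=> //; apply: top_ext => //; exists x0.
split=> // x; split; first exact: top_idem.
exact: top_ext.
Qed.

Lemma list_in_chain (F : (K -> Prop) -> Prop) (L : seq K) :
  (exists X, F X) ->
  (forall X Y, F X -> F Y -> (forall x, X x -> Y x) \/ (forall x, Y x -> X x)) ->
  (forall y, y \in L -> exists X, F X /\ X y) ->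
  exists X, F X /\ forall y, y \in L -> X y.
Proof.
move=> [X0 FX0] tot; elim: L => [|a L IH] H.
  by exists X0; split.
have [X [FX HX]] : exists X, F X /\ forall y, y \in L -> X y.
  by apply: IH => y yL; apply: H; rewrite inE yL orbT.
have [Y [FY Ya]] := H a (mem_head _ _).
case: (tot X Y FX FY) => XY.
  exists Y; split=> // y; rewrite inE => /orP[/eqP ->|yL] //; exact: XY (HX y yL).
exists X; split=> // y; rewrite inE => /orP[/eqP ->|yL]; [exact: XY|exact: HX].
Qed.

Lemma max_t_exists (I : K -> Prop) : t_ideal A I -> ~ I 1 ->
  exists M, max_t_ideal A M /\ forall x, I x -> M x.
Proof.
move=> tI nI1.
have [x0 [Ix0 nz]] : exists x0, I x0 /\ x0 != 0 by case: tI => _ [].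
have [|M [[tM nM1] [IM Mmax]]] :=
  @zorn_pred K (fun Q => t_ideal A Q /\ ~ Q 1) I (conj tI nI1)
    (ex_intro _ x0 Ix0); last first.
  exists M; split=> //; split=> //; split=> // Q tQ nQ1 MQ x; split; last exact: MQ.
  exact: (Mmax Q (conj tQ nQ1) MQ).
  move=> F FP [X FX] tot.
  have tX : forall X, F X -> t_ideal A X by move=> Y /FP [[]].
  have upX : forall x y, (exists X, F X /\ X x) -> (exists X, F X /\ X y) ->
      exists X, F X /\ X x /\ X y.
    move=> x y [Y [FY Yx]] [Z [FZ Zy]]; case: (tot Y Z FY FZ) => h.
      by exists Z; split=> //; split=> //; apply: h.
    by exists Y; split=> //; split=> //; apply: h.
  have nzU : exists x0, (exists X, F X /\ X x0) /\ x0 != 0.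
    exists x0; split=> //; exists X; split=> //; case: (FP X FX) => _; exact.
  have iU : is_ideal A (fun x => exists X, F X /\ X x).
    split; last by move=> x [Y [FY Yx]]; case: (tX Y FY) => [[_ YA]] _; exact: YA.
    split; first by exists X; split=> //; case: (tX X FX) => [[[]]].
    split.
      move=> x y Hx Hy; have [Y [FY [Yx Yy]]] := upX x y Hx Hy.
      exists Y; split=> //; case: (tX Y FY) => [[[_ [YD _]] _] _]; exact: YD.
    move=> a x Aa [Y [FY Yx]]; exists Y; split=> //.
    case: (tX Y FY) => [[[_ [_ YM]] _] _]; exact: YM.
  split.
    split=> //; split=> // x; split; last exact: top_ext.
    move=> [L [LU [hL Hx]]].
    have [Y [FY LY]] := list_in_chain (ex_intro _ X FX) tot LU.
    exists Y; split=> //; case: (tX Y FY) => _ [_ /(_ x) [h _]]; apply: h.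
    by exists L.
  by move=> [Y [FY Y1]]; case: (FP Y FY) => [[_ h]] _; exact: h Y1.
Qed.

Lemma vop_scale (L : seq K) (b y : K) : vop A (span A L) y ->
  vop A (span A (map (fun u => b * u) L)) (b * y).
Proof.
move=> Hy z Hz; rewrite [b * y]mulrC -mulrA [b * z]mulrC; apply: Hy => e He.
rewrite -mulrA; apply: Hz.
pose E' := fun e => span A (map (fun u => b * u) L) (b * e).
have : E' e.
  apply: span_sub He.
    have [S0 [SD SM]] := span_mod (map (fun u => b * u) L).
    split; first by rewrite /E' mulr0.
    split; first by move=> u v Hu Hv; rewrite /E' mulrDr; apply: SD.
    by move=> a u Aa Hu; rewrite /E' mulrCA; apply: SM.
  by move=> u uL; apply: span_in; apply: map_f.
by [].
Qed.

Lemma max_t_prime (M : K -> Prop) : max_t_ideal A M -> prime_ideal A M.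
Proof.
move=> [[iM [nzM tM]] [nM1 Mmax]].
split=> //; split=> // a b Aa Ab Mab.
apply: NNPP => /not_or_and [na nb].
have [[M0 [MD MM]] MA] := iM.
pose J := fun x => exists m r, M m /\ A r /\ x = m + r * a.
have MJ : forall x, M x -> J x by move=> x Mx; exists x, 0; rewrite mul0r addr0.
have iJ : is_ideal A J.
  split; last first.
    by move=> x [m [r [Mm [Ar ->]]]]; apply: AD; [apply: MA | apply: AM].
  split; first exact: MJ.
  split.
    move=> x y [m [r [Mm [Ar ->]]]] [m' [r' [Mm' [Ar' ->]]]].
    exists (m + m'), (r + r'); split; first exact: MD.
    split; first exact: AD.
    by rewrite mulrDl addrACA.
  move=> c x Ac [m [r [Mm [Ar ->]]]]; exists (c * m), (c * r).
  split; first exact: MM. split; first exact: AM.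
  by rewrite mulrDr mulrA.
have nzJ : exists x0, J x0 /\ x0 != 0.
  by case: nzM => x0 [Mx0 nz]; exists x0; split=> //; apply: MJ.
have Ja : J a by exists 0, 1; rewrite mul1r add0r; split=> //; split.
have top1 : top A J 1.
  apply: NNPP => n1.
  have := Mmax _ (t_ideal_top iJ nzJ) n1.
  have sub : forall x, M x -> top A J x by move=> x Mx; apply: top_ext => //; apply: MJ.
  move=> /(_ sub a) [h _]; apply: na; apply: h; exact: top_ext.
case: top1 => L [LJ [hL H1]].
have Hb := @vop_scale L b 1 H1; rewrite mulr1 in Hb.
apply: (nb); case: (tM b) => h _; apply: h.
exists (map (fun u => b * u) L); split.
  move=> y /mapP [u uL ->]; have [m [r [Mm [Ar ->]]]] := LJ u uL.
  rewrite mulrDr mulrCA; apply: MD; first by apply: MM.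
  by rewrite [b * a]mulrC; apply: MM.
split=> //.
have bnz : b != 0 by apply/eqP => b0; apply: nb; rewrite b0.
have [u uL unz] := hasP hL.
by apply/hasP; exists (b * u); [apply: map_f | rewrite mulf_neq0].
Qed.

Lemma ideal_adj (M : K -> Prop) a : is_ideal A M -> A a ->
  is_ideal A (fun x => exists m r, M m /\ A r /\ x = m + r * a).
Proof.
move=> [[M0 [MD MM]] MA] Aa.
split; last first.
  by move=> x [m [r [Mm [Ar ->]]]]; apply: AD; [apply: MA | apply: AM].
split; first by exists 0, 0; rewrite mul0r addr0.
split.
  move=> x y [m [r [Mm [Ar ->]]]] [m' [r' [Mm' [Ar' ->]]]].
  exists (m + m'), (r + r'); split; first exact: MD.
  split; first exact: AD.
  by rewrite mulrDl addrACA.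
move=> c x Ac [m [r [Mm [Ar ->]]]]; exists (c * m), (c * r).
split; first exact: MM. split; first exact: AM.
by rewrite mulrDr mulrA.
Qed.

Lemma chain_ideal (F : (K -> Prop) -> Prop) :
  (forall X, F X -> is_ideal A X) -> (exists X, F X) ->
  (forall X Y, F X -> F Y -> (forall x, X x -> Y x) \/ (forall x, Y x -> X x)) ->
  is_ideal A (fun x => exists X, F X /\ X x).
Proof.
move=> tX [X FX] tot.
have upX : forall x y, (exists X, F X /\ X x) -> (exists X, F X /\ X y) ->
    exists X, F X /\ X x /\ X y.
  move=> x y [Y [FY Yx]] [Z [FZ Zy]]; case: (tot Y Z FY FZ) => h.
    by exists Z; split=> //; split=> //; apply: h.
  by exists Y; split=> //; split=> //; apply: h.
split; last by move=> x [Y [FY Yx]]; case: (tX Y FY) => [_ YA]; exact: YA.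
split; first by exists X; split=> //; case: (tX X FX) => [[]].
split.
  move=> x y Hx Hy; have [Y [FY [Yx Yy]]] := upX x y Hx Hy.
  exists Y; split=> //; case: (tX Y FY) => [[_ [YD _]] _]; exact: YD.
move=> a x Aa [Y [FY Yx]]; exists Y; split=> //.
case: (tX Y FY) => [[_ [_ YM]] _]; exact: YM.
Qed.

End T.

Lemma has_nz_poly (K : fieldType) (p : {poly K}) : p != 0 -> has (fun y => y != 0) p.
Proof.
move=> pnz; apply/hasP; exists (lead_coef p); last by rewrite lead_coef_eq0.
rewrite lead_coefE; apply: mem_nth; rewrite prednK // lt0n size_poly_eq0 //.
Qed.

Lemma poly_mem (K : fieldType) (P : K -> Prop) (p : {poly K}) y :
  polyOverP P p -> y \in (p : seq K) -> P y.
Proof. by move=> Pp yp; rewrite -(nth_index 0 yp); apply: Pp. Qed.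

Lemma nthP (K : fieldType) (P : K -> Prop) (L : seq K) k :
  P 0 -> (forall y, y \in L -> P y) -> P L`_k.
Proof.
move=> P0 LP; case: (ltnP k (size L)) => lt; first by apply: LP; apply: mem_nth.
by rewrite nth_default.
Qed.

Section RR.
Variable K : fieldType.
Variables (D : K -> Prop) (S : {poly K} -> Prop).
Hypothesis hD : is_subring D.
Hypothesis hQ : is_quotient_field D.
Hypothesis hS : mult_subset D S.

Local Notation R := (circS S D).
Let hR : is_subring R := R_subring hD hS.

Lemma S_R s : S s -> polyOverP R s.
Proof. by move=> Ss i; apply: D_R => //; apply: S_D Ss i. Qed.

Lemma Nv_S s : S s -> Nv R s.
Proof.
move=> Ss; split; first exact: S_R.
split; first by apply/eqP => s0; apply: (S_neq0 hS); rewrite -s0.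
apply: (vop_A_eq hR); first by move=> y ys; apply: poly_mem (S_R Ss) ys.
move=> z Hz; rewrite mul1r; apply: R_sat => //.
exists s; split=> // i; apply: Hz; exact: (span_nth hR).
Qed.

Lemma maxt_notS M s : max_t_ideal R M -> S s -> ~ polyOverP M s.
Proof.
move=> [[_ [_ tM]] [nM1 _]] Ss PMs; apply: nM1; case: (tM 1) => h _; apply: h.
exists s; split; first by move=> y ys; exact: poly_mem PMs ys.
split; first by apply: has_nz_poly; case: (Nv_S Ss) => _ [].
case: (Nv_S Ss) => _ [_ /(_ 1) [_ h]]; apply: h; exact: R_1.
Qed.

Lemma circ_sub_w E x : nz_submodule R E -> circS S E x -> wop R E x.
Proof.
move=> [[E0 [ED EM]] _] [s [Ss Hs]] M maxM.
have [i ni] : exists i, ~ M s`_i.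
  apply: NNPP => h; apply: (maxt_notS maxM Ss) => i; apply: NNPP => ni; apply: h; by exists i.
exists s`_i; split; first by apply: S_R.
split=> //; by rewrite mulrC.
Qed.

Lemma claimA (J : K -> Prop) : is_ideal R J ->
  (forall P, prime_ideal R P -> (forall s, S s -> ~ polyOverP P s) ->
     ~ (forall x, J x -> P x)) ->
  exists s, S s /\ polyOverP J s.
Proof.
move=> iJ HJ; apply: NNPP => nex.
have nJ : forall s, S s -> ~ polyOverP J s by move=> s Ss Js; apply: nex; exists s.
have J0 : J 0 by case: iJ => [[]].
have [|P [[iP nP] [JP Pmax]]] :=
  @zorn_pred K (fun Q => is_ideal R Q /\ forall s, S s -> ~ polyOverP Q s) J
    (conj iJ nJ) (ex_intro _ 0 J0); last first.
  have [[P0 [PD PM]] PR] := iP.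
  apply: (HJ P) => //; split=> //; split.
    move=> P1; apply: (nP 1 (S1 hS)) => i; rewrite coef1; by case: (i == 0%N).
  move=> a b Ra Rb Pab; apply: NNPP => /not_or_and [na nb].
  have adj : forall c, R c -> ~ P c -> exists s, S s /\
      polyOverP (fun x => exists m r, P m /\ R r /\ x = m + r * c) s.
    move=> c Rc nc; apply: NNPP => h.
    have iPc := ideal_adj hR iP Rc.
    apply: (nc); apply: (Pmax _ (conj iPc _) _ c).
    - by move=> s Ss Hs; apply: h; exists s.
    - move=> x Px; exists x, 0; rewrite mul0r addr0; split=> //; split=> //.
      exact: R_0.
    - exists 0, 1; rewrite mul1r add0r; split=> //; split=> //; exact: R_1.
  have [s1 [Ss1 H1]] := adj a Ra na.
  have [s2 [Ss2 H2]] := adj b Rb nb.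
  apply: (nP _ (SM hS Ss1 Ss2)) => k; rewrite -[_ `_k]mul1r; apply: coefM_in => //.
  move=> i j; rewrite mul1r.
  have [m [r [Pm [Rr ->]]]] := H1 i; have [m' [r' [Pm' [Rr' ->]]]] := H2 j.
  have -> : (m + r * a) * (m' + r' * b) =
     (m' + r' * b) * m + (r * a) * m' + (r * r') * (a * b) by ring.
  have RM := R_mul hD hS; have RA := R_add hD hS.
  apply: (PD); first apply: (PD).
  - by apply: (PM) => //; apply: RA; [apply: PR | apply: RM].
  - by apply: (PM) => //; apply: RM.
  - by apply: (PM) => //; apply: RM.
move=> F FP [X FX] tot; split.
  by apply: chain_ideal => //; [move=> Y /FP [[]] | exists X].
move=> s Ss PUs.
have [Y [FY HY]] := @list_in_chain K F (s : seq K) (ex_intro _ X FX) tot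
  (fun y ys => poly_mem PUs ys).
case: (FP Y FY) => [[[[Y0 _] _] nY] _]; apply: (nY s Ss) => i.
by apply: nthP.
Qed.

Lemma zero_prime : prime_ideal R (fun x => x = 0).
Proof.
split.
  split.
    split=> //; split; [by move=> x y -> ->; rewrite addr0 | by move=> a x _ ->; rewrite mulr0].
  move=> x ->; exact: R_0.
split; first by move/eqP; rewrite oner_eq0.
by move=> a b _ _ /eqP; rewrite mulf_eq0 => /orP[/eqP|/eqP]; [left|right].
Qed.

Lemma sharp_Nv g : sharp R S g -> Nv R g.
Proof.
move=> [Rg Hg].
have gnz : g != 0.
  apply/eqP => g0; apply: (Hg _ zero_prime).
    move=> s Ss Hs; apply: (S_neq0 hS); suff <- : s = 0 by [].
    by apply/esym/polyP => i; rewrite coef0; apply/esym; exact: Hs.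
  by rewrite g0 => i; rewrite coef0.
split=> //; split=> //.
have gR : forall y, y \in (g : seq K) -> R y by move=> y; apply: poly_mem.
apply: (vop_A_eq hR) => //.
apply: NNPP => n1.
pose I := span R g.
have iI : is_ideal R I by split; [exact: (span_mod hR) | move=> x; exact: (span_A hR gR)].
have nzI : exists x0, I x0 /\ x0 != 0.
  have [y yg ynz] := hasP (has_nz_poly gnz); exists y; split=> //; exact: (span_in hR).
have nt1 : ~ top R I 1.
  move=> [L [LI [_ H]]]; apply: n1; apply: vop_mono H => e.
  exact: (span_sub (span_mod hR g) LI).
have [M [maxM IM]] := max_t_exists hR (t_ideal_top hR iI nzI) nt1.
apply: (Hg M (max_t_prime hR maxM)).
  by move=> s Ss; exact: maxt_notS maxM Ss.
move=> i; apply: IM; apply: (top_ext hR nzI); exact: (span_nth hR).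
Qed.

Lemma Nv_sharp :
  (forall E, nz_submodule R E -> seteq (circS S E) (wop R E)) ->
  forall g, Nv R g -> sharp R S g.
Proof.
move=> H g [Rg [gnz Hv]]; split=> // P pP nS Pg.
have [[[P0 [PD PM]] PR] [nP1 _]] := pP.
case: (classic (exists x, P x /\ x != 0)) => [nzP|zP].
  have : circS S P 1.
    case: (H P (conj (conj P0 (conj PD PM)) nzP) 1) => _; apply.
    move=> M maxM.
    have [i ni] : exists i, ~ M g`_i.
      apply: NNPP => h; have [[_ [_ tM]] [nM1 _]] := maxM; apply: nM1.
      case: (tM 1) => hh _; apply: hh; exists g; split.
        move=> y yg; rewrite -(nth_index 0 yg); apply: NNPP => nn; apply: h.
        by exists (index y g).
      split; first exact: has_nz_poly.
      by case: (Hv 1) => _; apply; exact: R_1.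
    exists g`_i; split; first exact: Rg.
    by split=> //; rewrite mulr1.
  move=> [s [Ss Hs]]; apply: (nS s Ss) => i; rewrite -[s`_i]mul1r; exact: Hs.
apply: (negP gnz); apply/eqP/polyP => i; rewrite coef0; apply: NNPP => ne; apply: zP.
by exists g`_i; split=> //; apply/eqP.
Qed.

Lemma w_sub_circ :
  (forall g, sharp R S g <-> Nv R g) ->
  forall E x, nz_submodule R E -> wop R E x -> circS S E x.
Proof.
move=> H E x [[E0 [ED EM]] [e [Ee enz]]] Hw.
have RM := R_mul hD hS; have RA := R_add hD hS.
pose J := fun r => R r /\ E (r * x).
have iJ : is_ideal R J.
  split; last by move=> r [].
  split; first by split; [exact: R_0 | rewrite mul0r].
  split.
    move=> r r' [Rr Er] [Rr' Er']; split; [exact: RA | rewrite mulrDl; exact: ED].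
  by move=> a r Ra [Rr Er]; split; [exact: RM | rewrite -mulrA; exact: EM].
have [s [Ss Js]] : exists s, S s /\ polyOverP J s; last first.
  by exists s; split=> // i; rewrite mulrC; case: (Js i).
apply: claimA => // P pP nS JP.
have [[[P0 [PD PM]] PR] [nP1 _]] := pP.
case: (classic (exists y, P y /\ y != 0)) => [nzP|zP].
  case: (classic (top R P 1)) => [[L [LP [hL H1]]]|nt].
    have gN : Nv R (Poly L).
      split.
        by move=> i; rewrite coef_Poly; apply: nthP; [exact: R_0 | move=> y /LP; exact: PR].
      split.
        apply/eqP => g0; have [y yL ynz] := hasP hL; move: ynz.
        by rewrite -(nth_index 0 yL) -coef_Poly g0 coef0 eqxx.
      apply: (vop_A_eq hR).
        move=> y yg; rewrite -(nth_index 0 yg).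
        have -> : (Poly L : seq K)`_(index y (Poly L)) = (Poly L)`_(index y (Poly L)) by [].
        rewrite coef_Poly; apply: nthP; [exact: R_0 | move=> z /LP; exact: PR].
      apply: vop_mono H1 => u; apply: (span_sub (span_mod hR _)) => y yL.
      rewrite -(nth_index 0 yL) -coef_Poly; exact: (span_nth hR).
    have [_ Hs] := (H _).2 gN.
    apply: (Hs P pP nS) => i; rewrite coef_Poly; exact: nthP.
  have [M [maxM PM']] :=
    max_t_exists hR (t_ideal_top hR (conj (conj P0 (conj PD PM)) PR) nzP) nt.
  have [r [Rr [nMr Er]]] := Hw M maxM.
  apply: nMr; apply: PM'; apply: (top_ext hR nzP); apply: JP; split => //.
case: (eqVneq x 0) => [x0|xnz].
  apply: zP; exists 1; split; last exact: oner_neq0.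
  by apply: JP; split; [exact: R_1 | rewrite x0 mul1r].
have [a [b [Da [Db [bnz eab]]]]] := hQ (e / x).
have anz : a != 0.
  apply/eqP => a0; move: eab; rewrite a0 mul0r => /eqP.
  by rewrite mulf_eq0 invr_eq0 (negbTE enz) (negbTE xnz).
apply: zP; exists a; split => //; apply: JP; split; first exact: D_R.
have -> : a * x = b * e.
  by rewrite -(divfK bnz a) -eab mulrAC divfK // mulrC.
apply: EM => //; exact: D_R.
Qed.

Lemma sub_Dmod E : submodule R E -> Dmod D E.
Proof.
move=> [E0 [ED EM]]; split=> //; split=> // d x Dd Ex; apply: EM => //; exact: D_R.
Qed.

Lemma circS_Dmod E : Dmod D E -> Dmod D (circS S E).
Proof.
move=> hE; have [E0 [ED EM]] := hE.
split; first exact: (circS_ext hS hE E0).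
split; first by move=> x y; apply: (circS_add hS hE).
move=> d x Dd Hx; apply: (circS_mul hS (A := D) hE EM) => //; exact: (D_R hD hS).
Qed.

Lemma circS_Rmod E : submodule R E -> submodule R (circS S E).
Proof.
move=> hE; have hE' := sub_Dmod hE; have [E0 [ED EM]] := hE'.
split; first exact: (circS_ext hS hE' E0).
split; first by move=> x y; apply: (circS_add hS hE').
move=> a x Ra Hx; exact: (circS_mul hS (A := D) hE' EM).
Qed.

Lemma part3 : is_semistar R (circS S) /\ seteq (circS S R) R.
Proof.
split; last first.
  move=> x; split; first exact: R_sat.
  have hRm : submodule R R.
    split; first exact: R_0.
    split; [exact: R_add | move=> a y; exact: R_mul].
  exact: (circS_ext hS (sub_Dmod hRm)).
split.
  move=> E [hE [e [Ee enz]]]; split; first exact: circS_Rmod.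
  exists e; split=> //; exact: (circS_ext hS (sub_Dmod hE)).
split.
  move=> x E xnz _ y; split.
    move=> [s [Ss Hs]]; exists (y / x); split; last by rewrite mulrC divfK.
    exists s; split=> // i; have [u [Eu Hu]] := Hs i.
    suff -> : y / x * s`_i = u by [].
    by rewrite mulrAC Hu mulrC mulKf.
  move=> [u [[s [Ss Hs]] ->]]; exists s; split=> // i.
  by exists (u * s`_i); split=> //; rewrite mulrA.
split; first by move=> E F _ _ EF x; apply: circS_mono.
split; first by move=> E [hE _] x; exact: (circS_ext hS (sub_Dmod hE)).
move=> E [hE _] x; split; first exact: (circS_idem hS (sub_Dmod hE)).
exact: (circS_ext hS (circS_Dmod (sub_Dmod hE))).
Qed.

Lemma part1 : t_linked D (circS S) R.
Proof.
move=> l lD hl Heq.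
have lR : forall y, y \in l -> R y by move=> y /lD; exact: D_R.
have [s [Ss Hs]] : circS S (span D l) 1 by case: (Heq 1) => _; apply; exact: R_1.
have spanR : forall x, span R l x -> R x by move=> x; exact: (span_A hR lR).
move=> x; split.
  move=> [L [LI [_ Hx]]]; apply: (vop_A hR) Hx => y /LI; exact: spanR.
move=> Rx; exists l; split; first by move=> y yl; exact: (span_in hR).
split=> //.
move=> z Hz; apply: R_mul => //; apply: R_sat => //.
exists s; split=> // i; apply: Hz.
have DmR : Dmod D (span R l).
  have [a [b c]] := span_mod hR l; split=> //; split=> // d u Dd Hu.
  by apply: c => //; exact: D_R.
move: (Hs i); rewrite mul1r; apply: (span_sub DmR) => y yl.
exact: (span_in hR).
Qed.

End RR.

Unset Implicit Arguments.

Theorem theorem2p1 (K : fieldType) (D : K -> Prop) (S : {poly K} -> Prop) :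
  is_subring D -> is_quotient_field D -> mult_subset D S ->
  let R := circS S D in
  t_linked D (circS S) R /\
  (forall g, S g -> Nv R g) /\
  (is_semistar R (circS S) /\ seteq (circS S R) R) /\
  ((forall E, nz_submodule R E -> seteq (circS S E) (wop R E)) <->
   (forall g, sharp R S g <-> Nv R g)).
Proof.
move=> hD hQ hS R; rewrite /R.
split; first exact: part1.
split; first by move=> g; exact: Nv_S.
split; first exact: part3.
split.
  move=> H g; split; first exact: sharp_Nv.
  exact: Nv_sharp.
move=> H E nzE x; split; first exact: circ_sub_w.
exact: w_sub_circ.
Qed.
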